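(* Every flat $\curlyvee$-algebra $S$ is simple (every homomorphism from $S$ into a $\curlyvee$-algebra is either injective or constant), hence subdirectly irreducible.
   Context: A flat $\curlyvee$-algebra is an algebra $(S,\curlyvee)$ with a binary operation and an element $0\in S$ such that $a\curlyvee b=0$ whenever $a,b$ are distinct and both different from $0$, and $a\curlyvee a=a$, $a\curlyvee 0=0\curlyvee a=a$ for all $a\in S$. A $\curlyvee$-algebra is an algebra $(S,\curlyvee)$ such that, defining $a\sqcup b=a\curlyvee(a\curlyvee b)$ and $a\lesssim b$ iff $b\sqcup a=b$: $\sqcup$ is associative, $a\sqcup a=a$, $a\sqcup b=(a\sqcup b)\sqcup a$; $\curlyvee$ is commutative and idempotent; $(a\curlyvee b)\sqcup(a\sqcup b)=a\sqcup b$; $a\sqcup(b\curlyvee c)=(a\sqcup b)\curlyvee(a\sqcup c)$; and if $d\lesssim a,b,c,a\curlyvee b,b\curlyvee c$ then $d\lesssim a\curlyvee c$. *)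

(* Defs.v *)
Definition vsq {S : Type} (j : S -> S -> S) (a b : S) : S := j a (j a b).

Definition vle {S : Type} (j : S -> S -> S) (a b : S) : Prop := vsq j b a = b.

Definition is_vee_algebra (S : Type) (j : S -> S -> S) : Prop :=
  (forall a b c, vsq j a (vsq j b c) = vsq j (vsq j a b) c) /\
  (forall a, vsq j a a = a) /\
  (forall a b, vsq j a b = vsq j (vsq j a b) a) /\
  (forall a b, j a b = j b a) /\
  (forall a, j a a = a) /\
  (forall a b, vsq j (j a b) (vsq j a b) = vsq j a b) /\
  (forall a b c, vsq j a (j b c) = j (vsq j a b) (vsq j a c)) /\
  (forall a b c d, vle j d a -> vle j d b -> vle j d c ->
     vle j d (j a b) -> vle j d (j b c) -> vle j d (j a c)).

Definition is_flat (S : Type) (j : S -> S -> S) (z : S) : Prop :=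
  (forall a b, a <> b -> a <> z -> b <> z -> j a b = z) /\
  (forall a, j a a = a) /\
  (forall a, j a z = a /\ j z a = a).

Definition is_hom {S T : Type} (j : S -> S -> S) (k : T -> T -> T) (f : S -> T) : Prop :=
  forall a b, f (j a b) = k (f a) (f b).

Definition injective_fun {S T : Type} (f : S -> T) : Prop :=
  forall a b, f a = f b -> a = b.

Definition constant_fun {S T : Type} (f : S -> T) : Prop :=
  forall a b, f a = f b.

Definition is_simple (S : Type) (j : S -> S -> S) : Prop :=
  forall (T : Type) (k : T -> T -> T), is_vee_algebra T k ->
  forall f : S -> T, is_hom j k f -> injective_fun f \/ constant_fun f.

(* subdirectly irreducible (relative to the class of ∨-algebras):
   S is nontrivial and whenever a family of homomorphisms into ∨-algebras
   jointly separates points (i.e. S embeds subdirectly into the product of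
   their images), one of them is already injective. *)
Definition is_subdirectly_irreducible (S : Type) (j : S -> S -> S) : Prop :=
  (exists a b : S, a <> b) /\
  forall (I : Type) (T : I -> Type) (k : forall i, T i -> T i -> T i),
    (forall i, is_vee_algebra (T i) (k i)) ->
    forall f : forall i, S -> T i,
    (forall i, is_hom j (k i) (f i)) ->
    (forall a b, (forall i, f i a = f i b) -> a = b) ->
    exists i, injective_fun (f i).

(* Main.v *)
Require Import Defs.
From Stdlib Require Import Classical.

Lemma flat_simple (S : Type) (j : S -> S -> S) (z : S) :
  is_flat S j z -> is_simple S j.
Proof.
  intros [H1 [H2 H3]] T k _ f hf.
  destruct (classic (injective_fun f)) as [Hi|Hn]; [left; exact Hi|right].
  unfold injective_fun in Hn.
  apply not_all_ex_not in Hn as [a Hn].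
  apply not_all_ex_not in Hn as [b Hn].
  apply imply_to_and in Hn as [Hab Hne].
  assert (Hz : exists c, c <> z /\ f c = f z).
  { destruct (classic (a = z)) as [Ha|Ha];
    destruct (classic (b = z)) as [Hb|Hb].
    - exfalso; apply Hne; congruence.
    - exists b; split; [exact Hb|]; subst; congruence.
    - exists a; split; [exact Ha|]; subst; congruence.
    - exists a; split; [exact Ha|].
      rewrite <- (H1 a b Hne Ha Hb), hf, <- Hab, <- hf, H2. reflexivity. }
  destruct Hz as [c [Hc Hfc]].
  assert (All : forall x, f x = f z).
  { intro x.
    destruct (classic (x = z)) as [Hx|Hx]; [subst; reflexivity|].
    destruct (classic (x = c)) as [Hxc|Hxc]; [subst; exact Hfc|].
    transitivity (f (j c x)).
    + rewrite hf, Hfc, <- hf. destruct (H3 x) as [_ E]. rewrite E. reflexivity.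
    + rewrite (H1 c x (fun e => Hxc (eq_sym e)) Hc Hx). reflexivity. }
  intros x y. rewrite (All x), (All y). reflexivity.
Qed.

Theorem proposition4p2 (S : Type) (j : S -> S -> S) (z : S) :
  is_flat S j z ->
  is_simple S j /\
  ((exists a b : S, a <> b) -> is_subdirectly_irreducible S j).
Proof.
  intro Hf. pose proof (flat_simple S j z Hf) as Hs.
  split; [exact Hs|].
  intros Hne. split; [exact Hne|].
  intros I T k Hk f hf Hsep.
  destruct Hne as [a [b Hab]].
  apply NNPP; intro Hno.
  apply Hab, Hsep. intro i.
  destruct (Hs (T i) (k i) (Hk i) (f i) (hf i)) as [Hi|Hc].
  - exfalso; apply Hno; exists i; exact Hi.
  - apply Hc.
Qed.
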